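(* Let $V$ be a finite-dimensional real inner product space with an orthogonal basis $e_1,\dots,e_M$ of nonzero vectors. Let $\beta\in V$ be nonzero and suppose there exist a positive integer $L$, functions $l_1\le l_2:\{1,\dots,L\}\to\mathbb Z$ and a partition $\{\Delta_{h,m}:(h,m)\in J\}$ of $\{1,\dots,M\}$ into nonempty sets, $J=\{(h,m):1\le h\le L,\ l_1(h)\le m\le l_2(h)\}$, such that with $r_{h,m}=\sum_{j\in\Delta_{h,m}}\|e_j\|^{-2}$ and $\epsilon(h)=(\sum_m m\,r_{h,m})/(\sum_m r_{h,m})$ (sums over $l_1(h)\le m\le l_2(h)$) we have $-1/2\le\epsilon(h)<1/2$, $\epsilon(1)>\cdots>\epsilon(L)$, and $\beta/\|\beta\|^2=\sum_{h=1}^L\sum_{m=l_1(h)}^{l_2(h)}\sum_{j\in\Delta_{h,m}}(\epsilon(h)-m)e_j/\|e_j\|^2$. Let $i\in\Delta_{h,m}$ and $j\in\Delta_{h',m'}$. Then $\beta\cdot(e_i-e_j)=\|\beta\|^2$ if and only if $h'=h$ and $m'=m+1$; and $\beta\cdot(e_i-e_j)\ge\|\beta\|^2$ if and only if either $m'\ge m+2$, or $m'=m+1$ and $h'\ge h$. *)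

(* Defs.v *)
From HB Require Import structures.
From mathcomp Require Import all_boot all_order all_algebra.
From mathcomp Require Import reals.
Set Implicit Arguments. Unset Strict Implicit. Unset Printing Implicit Defensive.
Import Order.TTheory GRing.Theory Num.Theory.
Local Open Scope ring_scope.

Definition inner_product (R : realType) (V : lmodType R) (dot : V -> V -> R) :=
  [/\ (forall (a : R) (x y z : V), dot (a *: x + y) z = a * dot x z + dot y z),
      (forall x y : V, dot x y = dot y x) &
      (forall x : V, x != 0 -> 0 < dot x x)].

Definition orthogonal_basis (R : realType) (V : lmodType R)
  (dot : V -> V -> R) (M : nat) (e : 'I_M -> V) :=
  [/\ (forall i, e i != 0),
      (forall i j, i != j -> dot (e i) (e j) = 0) &
      (forall v : V, exists c : 'I_M -> R, v = \sum_(i < M) c i *: e i)].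

Definition irange (a b : int) : seq int :=
  [seq a + (k%:Z) | k <- iota 0 (absz (b - a)).+1].

(* The partition {Delta_{h,m}} is given by labelling functions:
   j \in Delta_{h,m} iff hl j = h and ml j = m. *)
Definition Delta (M : nat) (hl : 'I_M -> nat) (ml : 'I_M -> int)
  (h : nat) (m : int) : {set 'I_M} :=
  [set j | (hl j == h) && (ml j == m)].

Definition rr (R : realType) (V : lmodType R) (dot : V -> V -> R) (M : nat)
  (e : 'I_M -> V) (hl : 'I_M -> nat) (ml : 'I_M -> int) (h : nat) (m : int) : R :=
  \sum_(j in Delta hl ml h m) (dot (e j) (e j))^-1.

Definition eps (R : realType) (V : lmodType R) (dot : V -> V -> R) (M : nat)
  (e : 'I_M -> V) (hl : 'I_M -> nat) (ml : 'I_M -> int) (l1 l2 : nat -> int)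
  (h : nat) : R :=
  (\sum_(m <- irange (l1 h) (l2 h)) m%:~R * rr dot e hl ml h m) /
  (\sum_(m <- irange (l1 h) (l2 h)) rr dot e hl ml h m).

(* Main.v *)
Require Import Defs.
From HB Require Import structures.
From mathcomp Require Import all_boot all_order all_algebra.
From mathcomp Require Import reals.
From mathcomp Require Import zify ring lra.
Import Order.TTheory GRing.Theory Num.Theory.
Local Open Scope ring_scope.

Lemma irange_uniq (a b : int) : uniq (irange a b).
Proof.
rewrite /irange map_inj_uniq ?iota_uniq // => x y /eqP.
rewrite (inj_eq (addrI a)) => /eqP [].
by [].
Qed.

Lemma mem_irange (a b m : int) : a <= m <= b -> m \in irange a b.
Proof.
move=> /andP [ha hb]; apply/mapP; exists (absz (m - a)).
  rewrite mem_iota add0n ltnS.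
  have h1 : (0 <= m - a) by rewrite subr_ge0.
  have h2 : (m - a <= b - a) by rewrite lerD2r.
  lia.
have h1 : (0 <= m - a) by rewrite subr_ge0.
rewrite gez0_abs //; ring.
Qed.

Theorem lemma5p3 (R : realType) (V : lmodType R) (dot : V -> V -> R)
  (M : nat) (e : 'I_M -> V) (beta : V)
  (L : nat) (l1 l2 : nat -> int) (hl : 'I_M -> nat) (ml : 'I_M -> int) :
  inner_product dot ->
  orthogonal_basis dot e ->
  beta != 0 ->
  (0 < L)%N ->
  (forall h : nat, (1 <= h <= L)%N -> l1 h <= l2 h) ->
  (* {Delta_{h,m} : (h,m) in J} is a partition of {1..M} into nonempty sets *)
  (forall j : 'I_M, (1 <= hl j <= L)%N /\ l1 (hl j) <= ml j <= l2 (hl j)) ->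
  (forall (h : nat) (m : int), (1 <= h <= L)%N -> l1 h <= m <= l2 h ->
     Delta hl ml h m != set0) ->
  (forall h : nat, (1 <= h <= L)%N ->
     - (1 / 2) <= eps dot e hl ml l1 l2 h < 1 / 2) ->
  (forall h : nat, (1 <= h < L)%N ->
     eps dot e hl ml l1 l2 h > eps dot e hl ml l1 l2 h.+1) ->
  (dot beta beta)^-1 *: beta =
    \sum_(1 <= h < L.+1) \sum_(m <- irange (l1 h) (l2 h))
      \sum_(j in Delta hl ml h m)
        ((eps dot e hl ml l1 l2 h - m%:~R) / dot (e j) (e j)) *: e j ->
  forall (i j : 'I_M) (h h' : nat) (m m' : int),
    i \in Delta hl ml h m -> j \in Delta hl ml h' m' ->
    (dot beta (e i - e j) = dot beta beta <-> h' = h /\ m' = m + 1) /\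
    (dot beta (e i - e j) >= dot beta beta <->
       m' >= m + 2 \/ (m' = m + 1 /\ (h' >= h)%N)).
Proof.
move=> [lin sym pd] [enz orth _] bnz L0 _ Hlab _ Heps Hdec Hb.
set E := eps dot e hl ml l1 l2.
set N := dot beta beta.
have N0 : 0 < N by exact: pd.
have dotD : forall x y z, dot (x + y) z = dot x z + dot y z.
  by move=> x y z; rewrite -[x in LHS]scale1r lin mul1r.
have dotZ : forall a x z, dot (a *: x) z = a * dot x z.
  move=> a x z; have := lin a x 0 z; rewrite addr0 => ->.
  have := lin 1 0 0 z; rewrite scale1r addr0 mul1r => /eqP.
  by rewrite -subr_eq subrr eq_sym => /eqP ->; rewrite addr0.
have dot0 : forall z, dot 0 z = 0.
  by move=> z; rewrite -(scale0r 0) dotZ mul0r.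
have dotsum : forall (I : Type) (r : seq I) (P : pred I) (F : I -> V) z,
    dot (\sum_(k <- r | P k) F k) z = \sum_(k <- r | P k) dot (F k) z.
  move=> I r P F z.
  exact: (big_morph (fun x => dot x z) (fun x y => dotD x y z) (dot0 z)).
have Hc : forall k, dot beta (e k) = N * (E (hl k) - (ml k)%:~R).
  move=> k.
  have [hk1 hk2] := Hlab k.
  have ek0 : dot (e k) (e k) != 0 by rewrite gt_eqF // pd.
  have L3 : forall (h : nat) (m : int),
    dot (\sum_(j in Delta hl ml h m)
        ((E h - m%:~R) / dot (e j) (e j)) *: e j) (e k)
    = if (h == hl k) && (m == ml k) then E (hl k) - (ml k)%:~R else 0.
    move=> h m; rewrite dotsum.
    case: ifP => [/andP [/eqP -> /eqP ->] | hne].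
      rewrite (bigD1 k) /=; last by rewrite inE !eqxx.
      rewrite big1; last first.
        by move=> j' /andP [_ jk]; rewrite dotZ (orth _ _ jk) mulr0.
      by rewrite addr0 dotZ mulrAC -mulrA divff // mulr1.
    rewrite big1 // => j'; rewrite inE => /andP [/eqP hj /eqP hm].
    have jk : j' != k by apply/eqP => jk; move: hne; rewrite -jk hj hm !eqxx.
    by rewrite dotZ (orth _ _ jk) mulr0.
  have L2 : forall (h : nat),
    dot (\sum_(m <- irange (l1 h) (l2 h)) \sum_(j in Delta hl ml h m)
        ((E h - m%:~R) / dot (e j) (e j)) *: e j) (e k)
    = if (h == hl k) then E (hl k) - (ml k)%:~R else 0.
    move=> h; rewrite dotsum.
    under eq_bigr => m _ do rewrite L3.
    case: eqP => [-> | hne].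
      rewrite (bigD1_seq (ml k)); [ | by apply: mem_irange | exact: irange_uniq].
      rewrite !eqxx big1_seq /= ?addr0 // => m /andP [hm _].
      by rewrite (negbTE hm).
    by rewrite big1_seq // => m _; case: eqP.
  have := congr1 (fun x => dot x (e k)) Hb => /=.
  rewrite dotZ dotsum.
  under eq_bigr => h _ do rewrite L2.
  rewrite (bigD1_seq (hl k)) /=; last by rewrite iota_uniq.
    2: by rewrite mem_index_iota ltnS.
  rewrite eqxx big1_seq ?addr0; last by move=> h /andP [/negbTE -> _].
  move=> HH.
  by rewrite -HH /N mulrA divff ?mul1r // gt_eqF.
have Hmono : forall a b : nat, (1 <= a)%N -> (a < b)%N -> (b <= L)%N -> E b < E a.
  move=> a; elim=> [//|b IH] a1 ab bL.
  have bL' : (b < L)%N by [].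
  have hb : E b.+1 < E b by apply: Hdec; rewrite bL' andbT; apply: leq_trans a1 _; rewrite -ltnS.
  move: ab; rewrite ltnS leq_eqVlt => /orP [/eqP ab| ab]; first by subst a.
  by apply: lt_trans hb (IH a1 ab (ltnW bL')).
move=> i j h h' m m'; rewrite !inE => /andP [/eqP hi /eqP mi] /andP [/eqP hj /eqP mj].
have dotB : dot beta (e i - e j) = dot beta (e i) - dot beta (e j).
  by rewrite sym -scaleN1r dotD dotZ !(sym _ beta) mulN1r.
rewrite dotB !Hc hi mi hj mj.
have [h1 hL] : (1 <= h)%N /\ (h <= L)%N by have [/andP [? ?] _] := Hlab i; subst h.
have [h1' hL'] : (1 <= h')%N /\ (h' <= L)%N by have [/andP [? ?] _] := Hlab j; subst h'.
have := Heps h; rewrite h1 hL => /(_ isT) /andP [Ea Eb].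
have := Heps h'; rewrite h1' hL' => /(_ isT) /andP [Ea' Eb'].
have key : N * (E h - m%:~R) - N * (E h' - m'%:~R) = N * ((E h - E h') + (m' - m)%:~R).
  by rewrite rmorphB /=; ring.
rewrite key.
have eqN : forall x, N * x = N <-> x = 1.
  move=> x; split => [H|->]; last by rewrite mulr1.
  by apply: (mulfI (lt0r_neq0 N0)); rewrite mulr1.
have geN : forall x, N <= N * x <-> 1 <= x.
  by move=> x; rewrite -{1}(mulr1 N) ler_pM2l.
rewrite eqN geN.
clear Hb Hc dotB key eqN geN lin sym pd enz orth bnz dotD dotZ dot0 dotsum.
rewrite -/E in Ea Eb Ea' Eb'.
have [k0|[k1|k2]] : (m' - m <= 0) \/ (m' - m = 1) \/ (2 <= m' - m) by lia.
- have kR : (m' - m)%:~R <= 0 :> R by rewrite -(ler_int R) in k0.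
  by split; split => H; exfalso; [lra | lia | lra | lia].
- rewrite k1 (_ : (1%:~R : R) = 1) //.
  have [hh|hh|hh] := ltngtP h h'.
  + have := Hmono h h' h1 hh hL' => hE.
    split; split => H.
    * exfalso; lra.
    * exfalso; lia.
    * right; split; lia.
    * lra.
  + have := Hmono h' h h1' hh hL => hE.
    split; split => H.
    * exfalso; lra.
    * exfalso; lia.
    * exfalso; lra.
    * exfalso; lia.
  + rewrite -hh; split; split => H.
    * split; [by [] | lia].
    * lra.
    * right; split; [lia | by []].
    * lra.
- have kR : 2 <= (m' - m)%:~R :> R by rewrite -(ler_int R) in k2.
  split; split => H.
  * exfalso; lra.
  * exfalso; lia.
  * left; lia.
  * lra.
Qed.
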